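(* Let $0<d<1$ and $c>0$ be constants. There is a constant $c'>0$ (depending only on $c,d$) such that the following holds. Let $m,n$ be positive integers with $n\leq m^d$ and $m\ge 2$, and suppose there is a scheme encoding every set $S\subseteq[m]$ with $|S|\leq n$ as a bit string $\phi(S)\in\{0,1\}^s$ with $s\leq c\,n\log_2 m$, together with a quantum bit-probe query algorithm that, given any query $i\in[m]$ and oracle access to $\phi(S)$, makes at most $t$ bit-probes and answers the question ''$i\in S$?'' either exactly, or with one-sided error (it always answers ''No'' when $i\notin S$, and when $i\in S$ it answers incorrectly with probability at most $\epsilon$ for some fixed $\epsilon<1$). Then $t\geq c'\log_2 m$. That is, set membership data structures using $O(n\log m)$ bits require $\Omega(\log m)$ bit-probes in this model.
   Context: $[m]=\{0,\dots,m-1\}$. Quantum bit-probe model: the algorithm operates on $\mathcal H_L\otimes\mathcal H_B\otimes\mathcal H_Z$ (address qubits indexing positions of the $s$-bit string, one data qubit, arbitrary workspace). For $x\in\{0,1\}^s$ the oracle $O_x$ acts by $|l\rangle|b\rangle|z\rangle\mapsto|l\rangle|b\oplus x_l\rangle|z\rangle$. A $t$-probe algorithm is a sequence of input-independent unitaries $U_0,\dots,U_t$; on query $i$ it starts from a fixed basis state encoding $i$, applies $U_tO_xU_{t-1}O_x\cdots U_1O_xU_0$, and measures designated output qubits in the computational basis to obtain its answer. *)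

(* Defs.v *)
From HB Require Import structures.
From mathcomp Require Import all_boot all_order all_algebra.
From mathcomp Require Import all_classical all_reals all_analysis.
From mathcomp Require complex.
Import complex.ComplexField.

Set Implicit Arguments.
Unset Strict Implicit.
Unset Printing Implicit Defensive.
Import Order.TTheory GRing.Theory Num.Theory.
Local Open Scope ring_scope.

Section QBitProbe.
Variable R : realType.
Local Notation C := (complex.complex R).

(* s = length of the stored bit string, w = dimension of the workspace.
   Computational basis of H_L (x) H_B (x) H_Z is indexed by 'I_s * bool * 'I_w. *)
Variables s w : nat.
Definition qidx := ('I_s * bool * 'I_w)%type.

Definition qstate := qidx -> C.

(* an operator given by its matrix entries U k j = <k|U|j> *)
Definition qop := qidx -> qidx -> C.

(* U is unitary: U^dagger U = I  (finite dimension, so also U U^dagger = I) *)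
Definition unitary (U : qop) : Prop :=
  forall i j : qidx,
    \sum_(k : qidx) complex.conjc (U k i) * U k j = (i == j)%:R.

Definition applyOp (U : qop) (psi : qstate) : qstate :=
  fun k => \sum_(j : qidx) U k j * psi j.

(* the oracle O_x : |l>|b>|z> |-> |l>|b xor x_l>|z>  (a permutation of the basis,
   which is an involution, so acting on amplitudes by the same substitution) *)
Definition oracle (x : 'I_s -> bool) (psi : qstate) : qstate :=
  fun k => let: (l, b, z) := k in psi (l, addb b (x l), z).

Definition basis (k0 : qidx) : qstate := fun k => (k == k0)%:R.

Fixpoint run (U : nat -> qop) (x : 'I_s -> bool) (r : nat) (psi : qstate)
  : qstate :=
  match r with
  | 0 => applyOp (U 0%N) psi
  | r'.+1 => applyOp (U r) (oracle x (run U x r' psi))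
  end.

Definition sqmod (a : C) : R := complex.Re a ^+ 2 + complex.Im a ^+ 2.

Definition prob_accept (out : qidx -> bool) (psi : qstate) : R :=
  \sum_(k : qidx | out k) sqmod (psi k).

(* A t-probe quantum bit-probe algorithm for queries in 'I_m:
   unitaries U_0..U_t, initial basis state init i for query i, and the
   answer "Yes" is read off the measured output qubits via [out]. *)
Record qalgo (m t : nat) := QAlgo {
  qa_U : nat -> qop;
  qa_unitary : forall r, (r <= t)%N -> unitary (qa_U r);
  qa_init : 'I_m -> qidx;
  qa_out : qidx -> bool
}.

Definition qa_yes (m t : nat) (A : qalgo m t) (x : 'I_s -> bool) (i : 'I_m) : R :=
  prob_accept (qa_out A) (run (qa_U A) x t (basis (qa_init A i))).

End QBitProbe.

Definition log2 (R : realType) (x : R) : R := ln x / ln 2.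

(* A set-membership scheme for subsets of [m] of size at most n, stored in
   s bits, with a t-probe quantum query algorithm with one-sided error eps
   (eps = 0 is the exact case). *)
Definition one_sided_membership (R : realType) (m n s w t : nat)
    (phi : {set 'I_m} -> 'I_s -> bool) (A : @qalgo R s w m t) (eps : R) : Prop :=
  forall S : {set 'I_m}, (#|S| <= n)%N ->
    forall i : 'I_m,
      (i \notin S -> qa_yes A (phi S) i = 0) /\
      (i \in S -> 1 - eps <= qa_yes A (phi S) i).

(* Main.v *)
Require Import Defs.
From HB Require Import structures.
From mathcomp Require Import all_boot all_order all_algebra.
From mathcomp Require Import all_classical all_reals all_analysis.
From mathcomp Require complex.
From mathcomp Require Import ring lra zify.
Import complex.ComplexField.
Import Order.TTheory GRing.Theory Num.Theory.
Local Open Scope ring_scope.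
Set Implicit Arguments. Unset Strict Implicit. Unset Printing Implicit Defensive.

Section LowDeg.
Variable (T : comNzRingType) (s : nat).

Definition chi (A : {set 'I_s}) (x : 'I_s -> bool) : T :=
  (A \subset [set l | x l])%:R.

Definition lowdeg (K : nat) (f : ('I_s -> bool) -> T) : Prop :=
  exists a : {set 'I_s} -> T, (forall A : {set 'I_s}, (K < #|A|)%N -> a A = 0) /\
    forall x, f x = \sum_(A : {set 'I_s}) a A * chi A x.

Lemma lowdeg_ext K f g : (forall x, f x = g x) -> lowdeg K f -> lowdeg K g.
Proof. by move=> fg [a [ha hf]]; exists a; split=> // x; rewrite -fg. Qed.

Lemma lowdeg_mono K K' f : (K <= K')%N -> lowdeg K f -> lowdeg K' f.
Proof.
move=> KK [a [ha hf]]; exists a; split=> // A HA; apply: ha.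
exact: leq_trans HA.
Qed.

Lemma lowdeg0 K : lowdeg K (fun _ => 0).
Proof. by exists (fun _ => 0); split=> // x; rewrite big1 // => A _; rewrite mul0r. Qed.

Lemma lowdegD K f g : lowdeg K f -> lowdeg K g -> lowdeg K (fun x => f x + g x).
Proof.
move=> [a [ha hf]] [b [hb hg]]; exists (fun A => a A + b A); split.
  by move=> A HA; rewrite ha // hb // addr0.
by move=> x; rewrite hf hg -big_split /=; apply: eq_bigr => A _; rewrite mulrDl.
Qed.

Lemma lowdeg_term K (C : {set 'I_s}) (c : T) : (#|C| <= K)%N -> lowdeg K (fun x => c * chi C x).
Proof.
move=> HC; exists (fun A => if A == C then c else 0); split.
  move=> A HA; case: eqP => // eAC; move: HA; rewrite eAC ltnNge HC //.
move=> x; rewrite (bigD1 C) //= eqxx big1 ?addr0 // => A /negbTE ->.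
by rewrite mul0r.
Qed.

Lemma chi0 x : chi finset.set0 x = 1.
Proof. by rewrite /chi finset.sub0set. Qed.

Lemma lowdeg_const K (c : T) : lowdeg K (fun _ => c).
Proof.
have H0 : (#|@finset.set0 'I_s| <= K)%N by rewrite cards0.
by apply: lowdeg_ext (lowdeg_term c H0) => x; rewrite chi0 mulr1.
Qed.

Lemma lowdeg_scale K (c : T) f : lowdeg K f -> lowdeg K (fun x => c * f x).
Proof.
move=> [a [ha hf]]; exists (fun A => c * a A); split.
  by move=> A HA; rewrite ha // mulr0.
by move=> x; rewrite hf big_distrr /=; apply: eq_bigr => A _; rewrite mulrA.
Qed.

Lemma lowdeg_sum_seq K (I : eqType) (r : seq I) (P : pred I) F :
  (forall i, lowdeg K (F i)) -> lowdeg K (fun x => \sum_(i <- r | P i) F i x).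
Proof.
move=> HF; elim: r => [|i r IH].
  by apply: lowdeg_ext (lowdeg0 K) => x; rewrite big_nil.
case Pi: (P i).
  apply: lowdeg_ext (lowdegD (HF i) IH) => x; by rewrite big_cons Pi.
by apply: lowdeg_ext IH => x; rewrite big_cons Pi.
Qed.

Lemma lowdeg_sum K (I : finType) (P : pred I) F :
  (forall i, lowdeg K (F i)) -> lowdeg K (fun x => \sum_(i | P i) F i x).
Proof. exact: lowdeg_sum_seq. Qed.

Lemma chiM (A B : {set 'I_s}) x : chi A x * chi B x = chi (A :|: B) x.
Proof.
rewrite /chi finset.subUset; case: (A \subset _); case: (B \subset _);
  by rewrite ?mulr1 ?mulr0 ?mul0r.
Qed.

Lemma lowdegM a b f g : lowdeg a f -> lowdeg b g ->
  lowdeg (a + b) (fun x => f x * g x).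
Proof.
move=> [af [haf hf]] [ag [hag hg]].
apply: (@lowdeg_ext _ (fun x => \sum_(A : {set 'I_s}) \sum_(B : {set 'I_s}) (af A * ag B) * chi (A :|: B) x)).
  move=> x; rewrite hf hg big_distrl /=; apply: eq_bigr => A _.
  rewrite big_distrr /=; apply: eq_bigr => B _.
  by rewrite -chiM mulrACA.
apply: lowdeg_sum => A; apply: lowdeg_sum => B.
case: (leqP #|A| a) => HA; last first.
  by apply: lowdeg_ext (lowdeg0 _) => x; rewrite haf // mul0r mul0r.
case: (leqP #|B| b) => HB; last first.
  by apply: lowdeg_ext (lowdeg0 _) => x; rewrite hag // mulr0 mul0r.
apply: lowdeg_term; apply: leq_trans (leq_card_setU A B) _.
exact: leq_add.
Qed.

Lemma lowdeg_prod_seq K (I : eqType) (r : seq I) F :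
  (forall i, lowdeg K (F i)) ->
  lowdeg (size r * K) (fun x => \prod_(i <- r) F i x).
Proof.
move=> HF; elim: r => [|i r IH].
  by apply: lowdeg_ext (lowdeg_const 0 1) => x; rewrite big_nil.
apply: (@lowdeg_mono (K + size r * K)); first by rewrite /= mulSn.
by apply: lowdeg_ext (lowdegM (HF i) IH) => x; rewrite big_cons.
Qed.

End LowDeg.
Arguments chi {T s} A x.

Lemma lowdeg_map (T1 T2 : comNzRingType) s K (g : T1 -> T2) (f : ('I_s -> bool) -> T1) :
  g 0 = 0 -> (forall a b, g (a + b) = g a + g b) ->
  lowdeg K f -> lowdeg K (fun x => g (f x)).
Proof.
move=> g0 gD [a [ha hf]]; exists (fun A => g (a A)); split.
  by move=> A HA; rewrite ha.
move=> x; rewrite hf (big_morph g gD g0); apply: eq_bigr => A _.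
by rewrite /chi; case: (A \subset _); rewrite ?mulr1 ?mulr0.
Qed.

Section Run.
Variables (R : realType) (s w : nat).

Lemma run_lowdeg (U : nat -> qop R s w) r (k0 k : qidx s w) :
  lowdeg r (fun x => run U x r (@Defs.basis R s w k0) k).
Proof.
elim: r k => [|r IH] k.
  have := @lowdeg_const _ s 0 (run U (fun _ => false) 0 (@Defs.basis R s w k0) k).
  by apply: lowdeg_ext.
apply: (@lowdeg_ext _ _ _ (fun x => \sum_j U r.+1 k j * oracle x (run U x r (@Defs.basis R s w k0)) j)) => //.
apply: lowdeg_sum => j; apply: lowdeg_scale.
case: j => [[l b] z] /=.
have H1 : (#|[set l]| <= 1)%N by rewrite cards1.
pose amp (b' : bool) x := run U x r (@Defs.basis R s w k0) (l, b', z).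
have E : forall x, run U x r (@Defs.basis R s w k0) (l, addb b (x l), z) =
   (1 * chi [set l] x) * amp (~~ b) x + (1 + (-1) * chi [set l] x) * amp b x.
  move=> x; rewrite /chi finset.sub1set inE /amp.
  by case: (x l); case: b => /=; ring.
have L1 := lowdegM (lowdeg_term (1 : complex.complex R) H1) (IH (l, ~~ b, z)).
have L2 := lowdegM (lowdegD (lowdeg_const s 1 (1 : complex.complex R)) (lowdeg_term (-1 : complex.complex R) H1)) (IH (l, b, z)).
have L := lowdegD L1 L2.
by apply: (lowdeg_ext _ L) => x; rewrite E.
Qed.

Lemma yes_lowdeg m t (A : qalgo R s w m t) i :
  lowdeg (t + t) (fun x => qa_yes A x i).
Proof.
rewrite /qa_yes /prob_accept; apply: lowdeg_sum => k.
have Re0 : complex.Re (0 : complex.complex R) = 0 by [].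
have ReD : forall a b : complex.complex R, complex.Re (a + b) = complex.Re a + complex.Re b.
  by case=> ? ?; case.
have Im0 : complex.Im (0 : complex.complex R) = 0 by [].
have ImD : forall a b : complex.complex R, complex.Im (a + b) = complex.Im a + complex.Im b.
  by case=> ? ?; case.
have HRe := lowdeg_map Re0 ReD (run_lowdeg (qa_U A) t (qa_init A i) k).
have HIm := lowdeg_map Im0 ImD (run_lowdeg (qa_U A) t (qa_init A i) k).
apply: (lowdeg_ext _ (lowdegD (lowdegM HRe HRe) (lowdegM HIm HIm))).
by move=> x; rewrite /sqmod !expr2.
Qed.

End Run.
Lemma rank_bound (F : fieldType) (I J : finType) (Q : pred I) (P : pred J)
   (f : I -> I -> F) (a : I -> J -> F) (g : J -> I -> F) :
 (forall u v, f u v = \sum_(j in P) a u j * g j v) ->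
 (forall u v, u \in Q -> v \in Q -> (f u v != 0) = (u == v)) ->
 (#|Q| <= #|P|)%N.
Proof.
move=> hf hd.
pose M := \matrix_(u < #|Q|, v < #|Q|) f (enum_val u) (enum_val v).
pose Am := \matrix_(u < #|Q|, p < #|P|) a (enum_val u) (enum_val p).
pose G := \matrix_(p < #|P|, v < #|Q|) g (enum_val p) (enum_val v).
have EM : M = Am *m G.
  apply/matrixP => u v; rewrite !mxE hf big_enum_val.
  by apply: eq_bigr => p _; rewrite !mxE.
pose dd := \row_(u < #|Q|) f (enum_val u) (enum_val u).
have ED : M = diag_mx dd.
  apply/matrixP => u v; rewrite !mxE; case: eqP => [->|nuv]; first by rewrite mulr1n.
  rewrite mulr0n; have := hd (enum_val u) (enum_val v) (enum_valP u) (enum_valP v).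
  case: eqP => [-> //|_ /= H]; case: nuv; apply: enum_val_inj.
  by apply/eqP; rewrite -H.
have rM : \rank M = #|Q|.
  apply: mxrank_unit; rewrite unitmxE unitfE ED det_diag.
  by apply/prodf_neq0 => u _; rewrite mxE hd ?enum_valP.
rewrite -rM EM; apply: leq_trans (mxrankM_maxr _ _) (rank_leq_row _).
Qed.
Lemma card_low_bound (R : realFieldType) s K (lam : R) : 0 <= lam -> lam <= 1 ->
  lam ^+ K * #|[pred A : {set 'I_s} | (#|A| <= K)%N]|%:R <= (1 + lam) ^+ s.
Proof.
move=> l0 l1.
rewrite -sumr_const mulr_sumr.
apply: (@le_trans _ _ (\sum_(A : {set 'I_s}) lam ^+ #|A|)).
  rewrite [X in _ <= X](bigID [pred A : {set 'I_s} | (#|A| <= K)%N]) /=.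
  rewrite -[X in X <= _]addr0; apply: lerD.
    apply: ler_sum => A HA; rewrite mulr1; apply: ler_wiXn2l => //.
  by apply: sumr_ge0 => A _; rewrite exprn_ge0.
have := @bigA_distr R 0 1 *%R +%R _ (fun _ : 'I_s => lam) (fun _ => 1).
rewrite prodr_const card_ord addrC => ->.
rewrite le_eqVlt; apply/orP; left; apply/eqP.

apply: eq_bigr => A _; rewrite -big_mkcond /= prodr_const //.
Qed.

Lemma binom_lower (R : realFieldType) m n : (n <= m)%N ->
  (m%:R / n%:R) ^+ n <= 'C(m, n)%:R :> R.
Proof.
elim: n m => [|n IH] m hnm; first by rewrite expr0 bin0.
case: m hnm => // m hnm; rewrite ltnS in hnm.
have E : 'C(m.+1, n.+1)%:R = (m.+1)%:R / (n.+1)%:R * 'C(m, n)%:R :> R.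
  have := mul_bin_diag m.+1 n => /(congr1 (fun k => k%:R : R)).
  rewrite !natrM /= => H.
  apply: (@mulfI _ (n.+1)%:R); first by rewrite pnatr_eq0.
  by rewrite -H mulrA mulrCA mulfV ?mulr1 // pnatr_eq0.
rewrite E exprS; apply: ler_wpM2l; first by rewrite divr_ge0.
apply: le_trans (IH _ hnm).
case: n IH hnm E => [|n] IH hnm E; first by rewrite !expr0.
apply: lerXn2r; rewrite ?qualifE /= ?divr_ge0 //.
rewrite ler_pdivrMr ?ltr0n // mulrAC ler_pdivlMr ?ltr0n //.
rewrite -!natrM ler_nat; nia.
Qed.
Lemma final_arith (R : realFieldType) (X Y N S T lam c mu l2 d lnn : R) :
 0 < X -> Y < 0 -> 0 < N -> 0 < lam -> 0 < c -> 0 < l2 -> 0 <= T ->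
 c * mu = (1 - d) * l2 / 2 -> lam <= mu ->
 Y * (N * (T + T)) + (X - lnn) * N <= S * lam ->
 lnn <= d * X -> S <= c * N * (X / l2) ->
 (1 - d) * l2 / (4 * - Y) * (X / l2) <= T.
Proof.
move=> X0 Y0 N0 l0 c0 l20 T0 hcmu hlm h1 h2 h3.
set Z := X / l2.
have Z0 : 0 < Z by apply: divr_gt0.
have XZ : X = Z * l2 by rewrite /Z mulfVK // gt_eqF.
have h4 : S * lam <= c * N * Z * mu.
  have hc : 0 <= c * N * Z by apply: mulr_ge0; [apply: mulr_ge0|]; lra.
  have ha : S * lam <= c * N * Z * lam by apply: ler_wpM2r; [lra | exact: h3].
  have hb : c * N * Z * lam <= c * N * Z * mu by apply: ler_wpM2l.
  lra.
have h5 : c * N * Z * mu = N * X * (1 - d) / 2.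
  have -> : c * N * Z * mu = N * Z * (c * mu) by ring.
  rewrite hcmu /Z; field; lra.
have h6 : Y * (N * (T + T)) + (X - d * X) * N <= N * X * (1 - d) / 2.
  have h7 : (X - d * X) * N <= (X - lnn) * N by apply: ler_wpM2r; lra.
  lra.
have h7 : N * ((1 - d) * X - 4 * (- Y) * T) <= 0.
  have -> : N * ((1 - d) * X - 4 * (- Y) * T) = 2 * (Y * (N * (T + T)) + (X - d * X) * N - N * X * (1 - d) / 2) by field.
  lra.
have h8 : (1 - d) * X - 4 * (- Y) * T <= 0.
  by rewrite -(pmulr_rle0 _ N0).
have -> : (1 - d) * l2 / (4 * - Y) * Z = (1 - d) * X / (4 * - Y).
  by rewrite /Z; field; rewrite lt_eqF // gt_eqF.
rewrite ler_pdivrMr; lra.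
Qed.


Theorem mainTheorem7 (R : realType) (d c : R) :
  0 < d -> d < 1 -> 0 < c ->
  exists c' : R, 0 < c' /\
    forall (m n s w t : nat) (eps : R)
           (phi : {set 'I_m} -> 'I_s -> bool) (A : @qalgo R s w m t),
      (0 < n)%N -> (2 <= m)%N ->
      n%:R <= m%:R `^ d ->
      s%:R <= c * n%:R * log2 (m%:R : R) ->
      eps < 1 ->
      @one_sided_membership R m n s w t phi A eps ->
      c' * log2 (m%:R : R) <= t%:R.
Proof.
move=> d0 d1 c0.
have l20 : 0 < ln (2 : R) by apply: ln_gt0; lra.
pose mu := (1 - d) * ln (2 : R) / (2 * c).
have mu0 : 0 < mu by apply: divr_gt0; [apply: mulr_gt0; lra | lra].
have hcmu : c * mu = (1 - d) * ln (2 : R) / 2 by rewrite /mu; field; lra.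
pose lam := mu / (1 + mu).
have lam0 : 0 < lam by apply: divr_gt0; lra.
have lam1 : lam < 1 by rewrite /lam ltr_pdivrMr; lra.
have lammu : lam <= mu by rewrite /lam ler_pdivrMr; nra.
have Y0 : ln lam < 0.
  by rewrite -(ln1 R) ltr_ln ?posrE //.
exists ((1 - d) * ln (2 : R) / (4 * - ln lam)); split.
  by apply: divr_gt0; [apply: mulr_gt0; lra | lra].
move=> m n s w t eps phi A n0 m2 hnd hs heps hmem.
pose K := (n * (t + t))%N.
pose P := [pred B : {set 'I_s} | (#|B| <= K)%N].
pose Q := [pred S : {set 'I_m} | #|S| == n].
have hlow : forall u : {set 'I_m},
    lowdeg K (fun x => (#|u| == n)%:R * \prod_(i in u) qa_yes A x i).
  move=> u; case: eqP => e.
    apply: lowdeg_scale.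
    have := lowdeg_prod_seq (enum u) (fun i => @yes_lowdeg R s w m t A i).
    rewrite -cardE e => H; refine (lowdeg_ext _ H) => x.
    by rewrite big_enum.
  by refine (lowdeg_ext _ (lowdeg0 _ _ _)) => x; rewrite mul0r.
have [a ha] := fin_all_exists hlow.
have key : (#|Q| <= #|P|)%N.
  apply: (@rank_bound R _ _ Q P
     (fun u v => (#|u| == n)%:R * \prod_(i in u) qa_yes A (phi v) i) a
     (fun B v => chi B (phi v))).
    move=> u v; have [ha0 ->] := ha u; rewrite [RHS]big_mkcond /=.
    apply: eq_bigr => B _; rewrite inE /=; case: leqP => // hB.
    by rewrite ha0 // mul0r.
  move=> u v; rewrite !inE => /eqP hu /eqP hv; rewrite hu eqxx mul1r.
  case: (eqVneq u v) => [<-|nuv].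
    apply: lt0r_neq0; apply: prodr_gt0 => i iu.
    have [_ h] := hmem u (eq_leq hu) i; apply: lt_le_trans (h iu); lra.
  have : ~~ (u \subset v).
    apply: contra nuv => suv; rewrite eqEcard suv hu hv leqnn.
    done.
  case/subsetPn => i iu niv.
  by rewrite (bigD1 i) //= (proj1 (hmem v (eq_leq hv) i) niv) mul0r eqxx.

have cQ : #|Q| = 'C(m, n).
  rewrite -[in RHS](card_ord m) -card_draws; apply: eq_card => S.
  by rewrite !inE.
have m1 : (1 < m)%N by [].
have lnm : 0 < ln (m%:R : R) by apply: ln_gt0; rewrite ltr1n.
have N0 : 0 < n%:R :> R by rewrite ltr0n.
have mpos : 0 < m%:R :> R by rewrite ltr0n; apply: leq_trans m2.
have hlnn : ln (n%:R : R) <= d * ln (m%:R : R).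
  by rewrite -ln_powR ler_ln ?posrE ?powR_gt0.
have nm : (n <= m)%N.
  rewrite leqNgt; apply/negP => hmn.
  have : ln (m%:R : R) <= ln (n%:R : R).
    by rewrite ler_ln ?posrE // ler_nat ltnW.
  nra.
have hb := @binom_lower R m n nm.
have hCP : ('C(m, n)%:R : R) <= #|P|%:R by rewrite ler_nat -cQ.
have hcnt := @card_low_bound R s K lam (ltW lam0) (ltW lam1).
have hexp : (1 + lam) ^+ s <= expR (s%:R * lam).
  rewrite expRM_natl; apply: lerXn2r; rewrite ?nnegrE.
  - lra.
  - exact/ltW/expR_gt0.
  - exact: expR_ge1Dx.
have hmain : lam ^+ K * (m%:R / n%:R) ^+ n <= expR (s%:R * lam).
  apply: le_trans (le_trans hcnt hexp).
  apply: ler_wpM2l; first exact/exprn_ge0/ltW.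
  exact: le_trans hb hCP.
have pK : 0 < lam ^+ K by apply: exprn_gt0.
have pmn : 0 < (m%:R / n%:R) ^+ n :> R by apply: exprn_gt0; apply: divr_gt0.
have : ln (lam ^+ K * (m%:R / n%:R) ^+ n) <= ln (expR (s%:R * lam)).
  by rewrite ler_ln ?posrE ?expR_gt0 ?mulr_gt0.
rewrite expRK.
have mn0 : 0 < m%:R / n%:R :> R by apply: divr_gt0.
rewrite lnM ?posrE // (lnXn _ lam0) (lnXn _ mn0) [ln (_ / n%:R)]ln_div ?posrE //.
rewrite -[_ *+ K]mulr_natr -[_ *+ n]mulr_natr.
rewrite /K natrM natrD => h1.
rewrite /log2.
apply: (final_arith (S := s%:R) lnm Y0 N0 lam0 c0 l20 (ler0n _ _) hcmu lammu _ hlnn).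
- exact: h1.
- exact: hs.
Qed.
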